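(* Let $\mu$ be a non-trivial continuous (atomless) positive measure on $\mathbb T$, singular with respect to Lebesgue measure, supported by a closed set $E\subset\mathbb T$ of finite entropy. Then for any $\varepsilon,\delta>0$ there exists an arc $I$ such that $0<\mu(I)<\delta$ and $\operatorname{Ent}_I(E)/\mu(I)<\varepsilon$.
   Context: $m$ is normalized Lebesgue measure on $\mathbb T$, and $|J|=m(J)$ for an arc $J$. A closed set $E\subset\mathbb T$ with $m(E)=0$ has finite entropy if $\sum_\ell |I_\ell|\log\frac1{|I_\ell|}<\infty$, where $\mathbb T\setminus E=\bigsqcup_\ell I_\ell$ with disjoint open arcs $I_\ell$ (equivalently $\int_{\mathbb T}\log\operatorname{dist}(\zeta,E)\,dm(\zeta)>-\infty$). For an arc $I$, the local entropy is $\operatorname{Ent}_I(E)=\sum_\ell |I_\ell|\log\frac{1}{|I_\ell|}$, where $I_\ell$ are the disjoint open arcs with $I\setminus E=\bigsqcup_\ell I_\ell$. *)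

(* Defs.v *)
From HB Require Import structures.
From mathcomp Require Import all_boot all_order all_algebra.
From mathcomp Require Import all_classical all_reals all_analysis.
Set Implicit Arguments. Unset Strict Implicit. Unset Printing Implicit Defensive.
Import Order.TTheory GRing.Theory Num.Theory.
Import numFieldNormedType.Exports.
Local Open Scope classical_set_scope.
Local Open Scope ring_scope.

(* The circle T is R/Z, parametrized by [0,1).  Normalized
   Lebesgue measure m on T is then Lebesgue measure of the lift.
   - A subset of T is represented by its 1-periodic lift to R.
   - A measure on T is represented by a measure on the (Borel) reals that is
     concentrated on [0,1).
   - An (open) arc of T is the image of an open interval ]a,b[ with
     0 < b - a <= 1; its lift is the union of the translates ]a+k,b+k[. *)

Section Circle.
Context {R : realType}.

Definition periodic1 (E : set R) : Prop := forall x, E x <-> E (x + 1).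

Definition arc_lift (a b : R) : set R :=
  [set x | exists k : int, a + k%:~R < x < b + k%:~R].

(* the connected components of an open set U of R that are bounded open
   intervals, encoded by their endpoints *)
Definition components (U : set R) : set (R * R) :=
  [set ab | ab.1 < ab.2 /\ `]ab.1, ab.2[ `<=` U /\ ~ U ab.1 /\ ~ U ab.2].

Definition xlog (l : R) : R := l * ln (l^-1).

(* sum over the complementary arcs I_l of E in T (E periodic, nonempty):
   one lift per arc, the one with left endpoint in [0,1) *)
Definition entropy (E : set R) : \bar R :=
  (\esum_(ab in [set ab | components (~` E) ab /\ (0 <= ab.1 < 1)%R])
     (xlog (ab.2 - ab.1))%:E)%E.

Definition finite_entropy (E : set R) : Prop := (entropy E < +oo)%E.

(* local entropy Ent_I(E) for the arc I = image of ]a,b[, 0 < b - a <= 1: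
   the components of I \ E correspond to those of ]a,b[ \ E *)
Definition local_entropy (E : set R) (a b : R) : \bar R :=
  (\esum_(ab in components (`]a, b[ `\` E)) (xlog (ab.2 - ab.1))%:E)%E.

End Circle.

(* Main.v *)
Require Import Defs.
From HB Require Import structures.
From mathcomp Require Import all_boot all_order all_algebra.
From mathcomp Require Import all_classical all_reals all_analysis.
From mathcomp Require Import measurable_realfun finmap.
From mathcomp.algebra_tactics Require Import ring lra.
Import Order.TTheory GRing.Theory Num.Theory.
Import numFieldNormedType.Exports.
Local Open Scope classical_set_scope.
Local Open Scope ring_scope.

Section helpers.
Variable R : realType.

Lemma exists_minmax (E : set R) (u v : R) : closed E ->
  (E `&` `[u, v]) !=set0 ->
  exists c d, [/\ E c, E d, u <= c, d <= v & (E `&` `[u, v]) `<=` `[c, d]].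
Proof.
move=> cE ne; set A := E `&` `[u, v].
have cA : closed A by apply: closedI => //; exact: itv_closed.
have lbA : lbound A u by move=> x [_]; rewrite /= in_itv /= => /andP[].
have ubA : ubound A v by move=> x [_]; rewrite /= in_itv /= => /andP[].
have hl : has_lbound A by exists u.
have hu : has_ubound A by exists v.
have Ac : A (inf A).
  apply: (itv_closed_infimums ne cA); split; first exact: ge_inf.
  by move=> y ly; exact: lb_le_inf.
have Ad : A (sup A).
  apply: (itv_closed_supremums ne cA); split; first exact: ub_le_sup.
  by move=> y ly; exact: ge_sup.
exists (inf A), (sup A); split.
- by case: Ac.
- by case: Ad.
- exact: lb_le_inf.
- exact: ge_sup.
- move=> x Ax; rewrite /= in_itv /=; apply/andP; split.
    exact: ge_inf.
  exact: ub_le_sup.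
Qed.

End helpers.

Section helpers.
Variable R : realType.

Lemma comp_sub (E : set R) (c d : R) : E c -> E d -> forall g,
  components (`]c, d[ `\` E) g -> [/\ components (~` E) g, c <= g.1 & g.2 <= d].
Proof.
move=> Ec Ed [a b] [ab [sub [n1 n2]]]; simpl in *.
have ca : c <= a.
  rewrite leNgt; apply/negP => ac.
  pose m := Num.min b c.
  have am : a < m by rewrite lt_min ab ac.
  have mc : m <= c by rewrite ge_min lexx orbT.
  have mb : m <= b by rewrite ge_min lexx.
  have := sub ((a + m) / 2); rewrite /= !in_itv /=.
  have -> : (a < (a + m) / 2) && ((a + m) / 2 < b) by apply/andP; split; lra.
  by move=> /(_ isT) [/andP[+ _] _]; lra.
have bd : b <= d.
  rewrite leNgt; apply/negP => db.
  pose m := Num.max a d.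
  have mb : m < b by rewrite gt_max ab db.
  have mc : d <= m by rewrite le_max lexx orbT.
  have mb' : a <= m by rewrite le_max lexx.
  have := sub ((b + m) / 2); rewrite /= !in_itv /=.
  have -> : (a < (b + m) / 2) && ((b + m) / 2 < b) by apply/andP; split; lra.
  by move=> /(_ isT) [/andP[_ +] _]; lra.
have Ea : E a.
  have [<-//|ca'] := eqVneq c a.
  apply: contrapT => nEa; apply: n1; split => //.
  rewrite /= in_itv /=; apply/andP; split; last lra.
  by rewrite lt_def ca andbT eq_sym.
have Eb : E b.
  have [->//|bd'] := eqVneq b d.
  apply: contrapT => nEb; apply: n2; split => //.
  rewrite /= in_itv /=; apply/andP; split; first lra.
  by rewrite lt_def bd andbT eq_sym.
split => //; split; first exact: ab.
split; first by move=> x /sub [].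
by split => /= /(_ _).
Qed.

End helpers.

Section helpers.
Variable R : realType.

Lemma gap_le1 (E : set R) g : periodic1 E -> components (~` E) g -> g.2 - g.1 <= 1.
Proof.
move=> per [g12 [sub [n1 _]]].
rewrite leNgt; apply/negP => h.
have Eg : E g.1 by apply: contrapT.
have /sub : `]g.1, g.2[%classic (g.1 + 1).
  by rewrite /= in_itv /=; apply/andP; split; lra.
by apply; apply/(per g.1).1.
Qed.

Lemma xlog_ge0 (l : R) : 0 < l -> l <= 1 -> 0 <= xlog l.
Proof.
move=> l0 l1; rewrite /xlog; apply: mulr_ge0; first exact: ltW.
by apply: ln_ge0; rewrite invf_ge1.
Qed.

Lemma seq_min (T : eqType) (h : T -> R) (s : seq T) :
  (forall x, x \in s -> 0 < h x) ->
  exists2 lam, 0 < lam & forall x, x \in s -> lam <= h x.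
Proof.
elim: s => [|x s IH] H; first by exists 1.
have [lam lam0 Hl] : exists2 lam, 0 < lam & forall x, x \in s -> lam <= h x.
  by apply: IH => y ys; apply: H; rewrite in_cons ys orbT.
have hx : 0 < h x by apply: H; rewrite in_cons eqxx.
exists (Num.min lam (h x)); first by rewrite lt_min lam0 hx.
move=> y; rewrite in_cons => /orP[/eqP ->|ys]; first by rewrite ge_min lexx orbT.
by rewrite ge_min Hl.
Qed.

Definition gapset (E : set R) : set (R * R) :=
  [set ab | components (~` E) ab /\ (0 <= ab.1 < 1)%R].
Definition gf (ab : R * R) : \bar R := (xlog (ab.2 - ab.1))%:E.

Lemma gf_ge0 (E : set R) g : periodic1 E -> components (~` E) g -> (0 <= gf g)%E.
Proof.
move=> per cg; rewrite /gf lee_fin; apply: xlog_ge0; last exact: gap_le1.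
by case: cg => h _; lra.
Qed.

Lemma esum_subset (T : choiceType) (A B : set T) (f : T -> \bar R) :
  A `<=` B -> (\esum_(i in A) f i <= \esum_(i in B) f i)%E.
Proof.
move=> AB; apply: ereal_sup_le => _ [X [finX XA] <-].
by exists X => //; split => //; exact: subset_trans AB.
Qed.

Lemma tail (E : set R) : periodic1 E -> finite_entropy E ->
  forall eta : R, 0 < eta -> exists2 lam : R, 0 < lam &
  forall Y, Y `<=` gapset E -> (forall g, Y g -> g.2 - g.1 < lam) ->
  (\esum_(i in Y) gf i <= eta%:E)%E.
Proof.
move=> per fe eta eta0.
have f0 : forall g, gapset E g -> (0 <= gf g)%E by move=> g [cg _]; exact: gf_ge0.
have es0 : (0 <= \esum_(i in gapset E) gf i)%E by apply: esum_ge0.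
have esfin : \esum_(i in gapset E) gf i \is a fin_num.
  by rewrite ge0_fin_numE//; exact: fe.
set s := fine (\esum_(i in gapset E) gf i).
have sE : \esum_(i in gapset E) gf i = s%:E by rewrite fineK.
have : ((s - eta)%:E < \esum_(i in gapset E) gf i)%E by rewrite sE lte_fin; lra.
move=> /ereal_sup_gt [_ [A [finA AS] <-]] hA.
have [lam lam0 Hlam] : exists2 lam : R, 0 < lam &
    forall g : R * R, g \in fset_set A -> lam <= g.2 - g.1.
  apply: (@seq_min _ (fun g : R * R => g.2 - g.1) (fset_set A)) => g.
  by rewrite in_fset_set// => /set_mem /AS [[h _] _]; lra.
exists lam => // Y YS Ylam.
have YSA : Y `<=` gapset E `&` ~` A.
  move=> g Yg; split; first exact: YS.
  move=> Ag; have := Hlam g; rewrite in_fset_set// => /(_ (mem_set Ag)).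
  by have := Ylam g Yg; lra.
apply: le_trans (@esum_subset _ _ _ gf YSA) _.
have := esumID A (gapset E) gf f0.
rewrite setIidr // [X in _ = X + _]esum_fset//; last by move=> g gA; apply: f0; apply: AS; exact: set_mem gA.
set y := (\sum_(i \in A) gf i)%E; set z := (\esum_(i in _ `&` _) gf i)%E.
have y0 : (0 <= y)%E by apply: fsume_ge0 => g gA; apply: f0; apply: AS.
have z0 : (0 <= z)%E by apply: esum_ge0 => g [/f0].
move=> h; rewrite sE in h.
have yfin : y \is a fin_num.
  rewrite ge0_fin_numE//; apply: (@le_lt_trans _ _ s%:E); last exact: ltry.
  by rewrite h leeDl.
have zfin : z \is a fin_num.
  rewrite ge0_fin_numE//; apply: (@le_lt_trans _ _ s%:E); last exact: ltry.
  by rewrite h leeDr.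
have hh : s = fine y + fine z by apply: EFin_inj; rewrite EFinD (fineK yfin) (fineK zfin).
have hA' : s - eta < fine y by rewrite -lte_fin fineK.
have z0' : 0 <= fine z by rewrite fine_ge0.
by rewrite -(fineK zfin) lee_fin; lra.
Qed.

End helpers.

Section meas.
Variable R : realType.
Variable mu : {measure set R -> \bar R}.

Lemma int_cases (k : int) : k = 0 \/ 1 <= k%:~R :> R \/ k%:~R <= -1 :> R.
Proof.
case: k => [[|n]|n]; first by left.
  by right; left; rewrite ler1n.
by right; right; rewrite NegzE mulrNz lerN2 ler1n.
Qed.

Lemma arc_open (a b : R) : open (arc_lift a b).
Proof.
have -> : arc_lift a b = \bigcup_(k in [set: int]) `]a + k%:~R, b + k%:~R[%classic.
  apply/seteqP; split => x /=.
    by move=> [k hk]; exists k => //=; rewrite in_itv.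
  by move=> [k _]; rewrite /= in_itv => hk; exists k.
by apply: bigcup_open => k _; exact: itv_open.
Qed.

Lemma mu_le_add (A B C : set R) : measurable A -> measurable B -> measurable C ->
  A `<=` B `|` C -> (mu A <= mu B + mu C)%E.
Proof.
move=> mA mB mC sub.
apply: le_trans (measureU2 mu mB mC).
by apply: le_measure => //; apply: mem_set => //; exact: measurableU.
Qed.

Lemma arc_eq (a b : R) : 0 <= a -> b <= 1 ->
  mu (~` `[0, 1[%classic) = 0%E -> mu (arc_lift a b) = mu `]a, b[%classic.
Proof.
move=> a0 b1 muT.
have marc : measurable (arc_lift a b) by apply: open_measurable; exact: arc_open.
have mC : measurable (~` `[0, 1[%classic : set R) by apply: measurableC.
apply/eqP; rewrite eq_le; apply/andP; split.
  rewrite -[X in (_ <= X)%E]adde0 -muT; apply: mu_le_add => //.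
  move=> x [k /andP[h1 h2]].
  have [x01|x01] := pselect ((`[0, 1[%classic : set R) x); last by right.
  left; move: x01; rewrite /= !in_itv /= => /andP[x0 x1].
  have [k0|[k1|k1]] := int_cases k.
  - have e : (k%:~R : R) = 0 by rewrite k0.
    by apply/andP; split; lra.
  - lra.
  - lra.
apply: le_measure; try (apply: mem_set => //).
by move=> x hx; exists 0; rewrite addr0 addr0; move: hx; rewrite /= in_itv.
Qed.

Lemma mu_finB :
  (mu (`[0%R, 1%R[%classic : set R) < +oo)%E -> mu (~` `[0, 1[%classic) = 0%E ->
  forall B, measurable B -> (mu B < +oo)%E.
Proof.
move=> fin muT B mB.
apply: (@le_lt_trans _ _ (mu (`[0%R, 1%R[%classic : set R) + mu (~` `[0%R, 1%R[%classic))%E).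
  apply: mu_le_add => //; first exact: measurableC.
  by move=> x _; have [h|h] := pselect ((`[0, 1[%classic : set R) x); [left|right].
by rewrite muT adde0.
Qed.

End meas.

Section meas.
Variable R : realType.
Variable mu : {measure set R -> \bar R}.

Lemma incr_ge (f : nat -> nat) : increasing_seq f -> forall n, (n <= f n)%N.
Proof.
move=> /increasing_seqP hf; elim => [|n IH]//.
by apply: leq_ltn_trans IH (hf n).
Qed.

Definition rad (n : nat) : R := (n.+1%:R)^-1.

Definition bitv (x r : R) : set R := `]x - r, x + r[.

Lemma rad_gt0 n : 0 < rad n. Proof. by rewrite /rad invr_gt0 ltr0n. Qed.

Lemma rad_le m n : (m <= n)%N -> rad n <= rad m.
Proof. by move=> mn; rewrite /rad lef_pV2 ?posrE ?ltr0n// ler_nat. Qed.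

Lemma rad_lt m : rad m.+1 < rad m.
Proof. by rewrite /rad ltf_pV2 ?posrE ?ltr0n// ltr_nat. Qed.

Lemma unif_small (fin : forall B, measurable B -> (mu B < +oo)%E)
  (atom : forall x, mu [set x] = 0%E) (delta : R) : 0 < delta ->
  exists2 r : R, 0 < r & forall x, 0 <= x <= 1 ->
    (mu (bitv x r) < delta%:E)%E.
Proof.
move=> d0; apply: contrapT => H.
have H' : forall n : nat, exists x : R, 0 <= x <= 1 /\
    (delta%:E <= mu (bitv x (rad n)))%E.
  move=> n; apply: contrapT => Hn; apply: H; exists (rad n); first exact: rad_gt0.
  move=> x hx; rewrite ltNge; apply/negP => hle; apply: Hn; exists x; split => //.
have [u hu] := choice H'.
have bu : bounded_fun u.
  rewrite /=; apply/ex_bound; first exact: (@globally_properfilter _ _ 0%N).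
  exists 1 => n _.
  by have [/andP[h0 h1] _] := hu n; rewrite /= ger0_norm.
have [f finc cf] := bolzano_weierstrass bu.
set l := limn (u \o f).
have ul : (u \o f) @ \oo --> l by exact: cf.
have bigG : forall m, (delta%:E <= mu (bitv l (rad m)))%E.
  move=> m; have rho0 : 0 < rad m - rad m.+1 by have := rad_lt m; lra.
  have hn0 := (cvgrPdist_lt (u \o f) l).1 ul _ rho0.
  have hn : \forall t \near \oo, `|l - (u \o f) t| < rad m - rad m.+1 by apply: hn0.
  have hn2 := nbhs_infty_ge m.+1.
  have [k [hk1 hk2]] := filter_ex (filterI hn hn2).
  have [_ hd] := hu (f k).
  apply: le_trans hd _.
  apply: le_measure; rewrite /bitv; try (apply: mem_set; exact: measurable_itv).
  have rk : rad (f k) <= rad m.+1 by apply: rad_le; apply: leq_trans hk2 (incr_ge _ finc k).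
  move: hk1; rewrite /= ltr_norml => /andP[a1 a2].
  move=> x; rewrite /= !in_itv /= => /andP[b1 b2].
  by apply/andP; split; lra.
pose G m := bitv l (rad m).
have GE : \bigcap_m G m = [set l].
  apply/seteqP; split => x; last first.
    move=> -> m _; rewrite /G /bitv /= in_itv /=.
    by have r0 := rad_gt0 m; apply/andP; split; lra.
  move=> Gx; apply: contrapT => /eqP xl.
  have e0 : 0 < `|x - l| by rewrite normr_gt0 subr_eq0.
  have [n hn] := filter_ex (near_infty_natSinv_lt (PosNum e0)).
  have := Gx n I; rewrite /G /bitv /= in_itv /= => /andP[a b].
  move: hn; rewrite /= -/(rad n) ltr_normr => /orP[]; lra.
have mG : forall m, measurable (G m) by move=> m; exact: measurable_itv.
have hc : mu \o G @ \oo --> mu (\bigcap_m G m).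
  apply: nonincreasing_cvg_mu => //.
  - exact: fin.
  - rewrite GE; exact: measurable_set1.
  - apply/nonincreasing_seqP => n; apply/subsetPset => x.
    rewrite /G /bitv /= !in_itv /= => /andP[a b].
    by have r0 := rad_lt n; apply/andP; split; lra.
rewrite GE atom in hc.
have hb : \forall m \near \oo, (delta%:E <= (mu \o G) m)%E.
  by apply: nearW => m; exact: bigG.
have := lime_ge (cvgP _ hc) hb.
rewrite (cvg_lim _ hc)// lee_fin => hh; have hh2 : delta <= 0 by apply: hh.
lra.
Qed.


End meas.

Lemma idx_eq (R : realType) (n i j : nat) : (0 < n)%N ->
  i%:R / n%:R < j.+1%:R / n%:R :> R -> j%:R / n%:R < i.+1%:R / n%:R :> R -> i = j.
Proof.
move=> n0; have ni : 0 < (n%:R : R)^-1 by rewrite invr_gt0 ltr0n.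
rewrite !ltr_pM2r // !ltr_nat => h1 h2.
by apply/eqP; rewrite eqn_leq -ltnS h1 -ltnS h2.
Qed.

Theorem lemma2p2 (R : realType) (mu : {measure set R -> \bar R}) (E : set R)
  (* E is a closed subset of T = R/Z *)
  (E_per : periodic1 E) (E_closed : closed E)
  (* m(E) = 0 *)
  (E_null : (lebesgue_measure (E `&` (`[0%R, 1%R[%classic : set R)) = 0)%E)
  (* E has finite entropy *)
  (E_ent : finite_entropy E)
  (* mu is a (finite) positive measure on T *)
  (mu_T : (mu (~` (`[0%R, 1%R[%classic : set R)) = 0)%E)
  (mu_fin : (mu (`[0%R, 1%R[%classic : set R) < +oo)%E)
  (* non-trivial *)
  (mu_nz : (mu (`[0%R, 1%R[%classic : set R) != 0)%E)
  (* continuous (atomless) *)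
  (mu_atomless : forall x : R, (mu [set x] = 0)%E)
  (* singular with respect to Lebesgue measure *)
  (mu_sing : exists A : set R, measurable A /\
     (lebesgue_measure A = 0)%E /\ (mu (~` A) = 0)%E)
  (* supported by E *)
  (mu_supp : (mu (~` E) = 0)%E) :
  forall eps delta : R, 0 < eps -> 0 < delta ->
  exists a b : R, a < b /\ b <= a + 1 /\
    (0 < mu (arc_lift a b))%E /\ (mu (arc_lift a b) < delta%:E)%E /\
    (local_entropy E a b * ((fine (mu (arc_lift a b)))^-1)%:E < eps%:E)%E.
Proof.
move=> eps delta e0 d0; apply: contrapT => H.
have Hcon : forall a b : R, a < b -> b <= a + 1 -> (0 < mu (arc_lift a b))%E ->
    (mu (arc_lift a b) < delta%:E)%E ->
    (eps%:E <= local_entropy E a b * ((fine (mu (arc_lift a b)))^-1)%:E)%E.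
  move=> a b ab ba h1 h2; rewrite leNgt; apply/negP => h3; apply: H.
  by exists a, b.
have fin := mu_finB R mu mu_fin mu_T.
have mC : measurable (~` E) by apply: open_measurable; exact: closed_openC.
set M := fine (mu (`[0%R, 1%R[%classic : set R)).
have M0 : 0 < M.
  rewrite /M fine_gt0//; apply/andP; split; last exact: mu_fin.
  by rewrite lt0e mu_nz measure_ge0.
have ME : mu (`[0%R, 1%R[%classic : set R) = M%:E.
  by rewrite /M fineK// ge0_fin_numE.
have eta0 : 0 < eps * M / 2 by rewrite divr_gt0// mulr_gt0.
have [lam lam0 Htail] := tail R E E_per E_ent (eps * M / 2) eta0.
have [r r0 Hr] := unif_small R mu fin mu_atomless delta d0.
have mlr : 0 < Num.min lam r by rewrite lt_min lam0 r0.
have [N hN] := filter_ex (near_infty_natSinv_lt (PosNum mlr)).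
move: hN; rewrite /= lt_min => /andP[hNl hNr].
set n := N.+1.
have hNr' : (n%:R : R)^-1 < r := hNr.
have hNl' : (n%:R : R)^-1 < lam := hNl.
have n0 : (0 < n)%N by [].
have nR0 : 0 < (n%:R : R) by rewrite ltr0n.
pose u (j : nat) : R := j%:R / n%:R.
pose v (j : nat) : R := j.+1%:R / n%:R.
have vu : forall j, v j = u j + n%:R^-1.
  by move=> j; rewrite /v /u -natr1 mulrDl mul1r.
have u0 : forall j, 0 <= u j by move=> j; rewrite /u divr_ge0.
have v1 : forall j, (j < n)%N -> v j <= 1.
  by move=> j jn; rewrite /v ler_pdivrMr// mul1r ler_nat.
have hn1 : n%:R^-1 <= 1 :> R by rewrite invf_le1// ler1n.
pose Y (j : nat) := [set g | gapset R E g /\ u j <= g.1 /\ g.2 <= v j].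
have gf0 : forall g, gapset R E g -> (0 <= gf R g)%E.
  by move=> g [cg _]; exact: gf_ge0.
have cellb : forall j, (j < n)%N ->
    (eps%:E * mu (`[u j, v j[%classic : set R) <= \esum_(i in Y j) gf R i)%E.
  move=> j jn.
  have [m0|mpos] := eqVneq (mu (`[u j, v j[%classic : set R)) 0%E.
    by rewrite m0 mule0; apply: esum_ge0 => g [/gf0].
  have mpos' : (0 < mu (`[u j, v j[%classic : set R))%E by rewrite lt0e mpos measure_ge0.
  have ne : (E `&` `[u j, v j]) !=set0.
    apply: contrapT => hne; move/negP: mpos; apply; apply/eqP.
    apply/eqP; rewrite eq_le measure_ge0 andbT -mu_supp.
    apply: le_measure; [apply: mem_set; exact: measurable_itv|exact: mem_set mC|].
    move=> x hx Ex; apply: hne; exists x; split => //.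
    by move: hx; rewrite /= !in_itv /= => /andP[h1 h2]; rewrite h1 ltW.
  have [c [d [Ec Ed uc dv sub]]] := exists_minmax R E (u j) (v j) E_closed ne.
  have mcd : (mu (`[u j, v j[%classic : set R) <= mu (`]c, d[%classic : set R))%E.
    have mrest : measurable ([set c] `|` [set d] `|` ~` E).
      by apply: measurableU => //; apply: measurableU; exact: measurable_set1.
    have hsub : (`[u j, v j[%classic : set R) `<=` `]c, d[%classic `|` ([set c] `|` [set d] `|` ~` E).
      move=> x hx; have [Ex|nEx] := pselect (E x); last by right; right.
      have hxc : (`[u j, v j]%classic : set R) x.
        by move: hx; rewrite /= !in_itv /= => /andP[h1 h2]; rewrite h1 ltW.
      have := sub x (conj Ex hxc).
      rewrite /= !in_itv /= => /andP[cx xd].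
      have [->|cx'] := eqVneq c x; first by right; left; left.
      have [->|xd'] := eqVneq x d; first by right; left; right.
      left; rewrite /= ?in_itv /=; apply/andP; split.
        by rewrite lt_def cx andbT eq_sym.
      by rewrite lt_def xd andbT eq_sym.
    apply: le_trans (mu_le_add R mu _ _ _ (measurable_itv _) (measurable_itv _) mrest hsub) _.
    have m12 : measurable ([set c] `|` [set d]) by apply: measurableU; exact: measurable_set1.
    have rest0 : (mu ([set c] `|` [set d] `|` ~` E) <= 0)%E.
      apply: le_trans (mu_le_add R mu _ _ _ mrest m12 mC (fun x h => h)) _.
      rewrite mu_supp adde0.
      apply: le_trans (mu_le_add R mu _ _ _ m12 (measurable_set1 c) (measurable_set1 d) (fun x h => h)) _.
      by rewrite !mu_atomless adde0.
    by rewrite -[X in (_ <= X)%E]adde0; apply: leeD.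
  have mcd0 : (0 < mu (`]c, d[%classic : set R))%E by apply: lt_le_trans mcd.
  have cd : c < d.
    rewrite ltNge; apply/negP => dc; move: mcd0.
    have -> : (`]c, d[%classic : set R) = set0.
      apply/seteqP; split => x //; rewrite /= in_itv /= => /andP[h1 h2].
      by move: (lt_trans h1 h2); rewrite ltNge dc.
    by rewrite measure0 ltxx.
  have c0 : 0 <= c by apply: le_trans (u0 j) uc.
  have d1 : d <= 1 by apply: le_trans dv (v1 j jn).
  have hae := arc_eq R mu c d c0 d1 mu_T.
  have dc1 : d <= c + 1 by move: (vu j); lra.
  have mlt : (mu (`]c, d[%classic : set R) < delta%:E)%E.
    apply: le_lt_trans (Hr (u j) _); last by apply/andP; split; [exact: u0|move: (vu j) (v1 j jn); lra].
    apply: le_measure; try (apply: mem_set; exact: measurable_itv).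
    move=> x; rewrite /bitv /= !in_itv /= => /andP[h1 h2]; apply/andP; split.
      lra.
    by move: (vu j) hNr'; lra.
  have := Hcon c d cd dc1 (ltac:(by rewrite hae)) (ltac:(by rewrite hae)).
  rewrite hae.
  have mfin : mu (`]c, d[%classic : set R) \is a fin_num.
    by rewrite ge0_fin_numE//; apply: fin; exact: measurable_itv.
  set m := fine (mu (`]c, d[%classic : set R)).
  have mE : mu (`]c, d[%classic : set R) = m%:E by rewrite /m fineK.
  have m0 : 0 < m by rewrite -lte_fin -mE.
  rewrite lee_pdivlMr// -mE => hle.
  apply: le_trans (lee_wpmul2l _ mcd) _; first by rewrite lee_fin ltW.
  apply: le_trans hle _.
  apply: esum_subset => g /(comp_sub R E c d Ec Ed) [cg cg1 cg2].
  have g12 : g.1 < g.2 by case: cg.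
  split; first by split => //; apply/andP; split; lra.
  by split; lra.
have cover : (`[0%R, 1%R[%classic : set R) = \bigcup_(j in `I_n) (`[u j, v j[%classic : set R).
  apply/seteqP; split => x.
    rewrite /= in_itv /= => /andP[x0 x1].
    have := truncn_itv (mulr_ge0 x0 (ltW nR0)) => /andP[t1 t2].
    exists (Num.truncn (x * n%:R)).
      rewrite /= -(ltr_nat R); apply: le_lt_trans t1 _.
      by rewrite -[X in _ < X]mul1r ltr_pM2r.
    rewrite /= in_itv /=; apply/andP; split.
      by rewrite /u ler_pdivrMr.
    by rewrite /v ltr_pdivlMr.
  move=> [j /= jn]; rewrite /= !in_itv /= => /andP[h1 h2]; apply/andP; split.
    exact: le_trans (u0 j) h1.
  exact: lt_le_trans h2 (v1 j jn).
have triv : trivIset `I_n (fun j => (`[u j, v j[%classic : set R)).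
  move=> i j _ _ [x []]; rewrite /= !in_itv /= => /andP[a1 a2] /andP[b1 b2].
  apply: (@idx_eq R n i j n0).
    by change (u i < v j); lra.
  by change (u j < v i); lra.
have musum : mu (`[0%R, 1%R[%classic : set R) =
    (\sum_(j \in `I_n) mu (`[u j, v j[%classic : set R))%E.
  rewrite cover measure_fin_bigcup //; try exact: finite_II.
  all: try (move=> j _; exact: measurable_itv).
have trivY : trivIset [set: nat] Y.
  move=> i j _ _ [g [[[[g12 _] _] [a1 a2]] [_ [b1 b2]]]].
  apply: (@idx_eq R n i j n0).
    by change (u i < v j); lra.
  by change (u j < v i); lra.
have Ysub : \bigcup_(j in `I_n) Y j `<=` gapset R E by move=> g [j _ []].
have Ylen : forall g, (\bigcup_(j in `I_n) Y j) g -> g.2 - g.1 < lam.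
  by move=> g [j _ [_ [a1 a2]]]; move: (vu j); lra.
have hT := Htail _ Ysub Ylen.
rewrite (esum_bigcup Y (gf R)) in hT; last 2 first.
- exact: sub_trivIset trivY.
- by move=> g /Ysub /gf0.
rewrite esum_fset in hT; last 2 first.
- exact: finite_II.
- by move=> j _; apply: esum_ge0 => g [/gf0].
have : (eps%:E * M%:E <= (eps * M / 2)%:E)%E.
  apply: le_trans hT; rewrite -ME musum ge0_mule_fsumr; last by move=> j; exact: measure_ge0.
  apply: lee_fsum; first exact: finite_II.
  by move=> j jn; apply: cellb.
rewrite -EFinM lee_fin => hh.
have : 0 < eps * M by rewrite mulr_gt0.
lra.
Qed.
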